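(* (a) Let $n\ge1$ and $x\in\overline{L_n}$. Then there are ultrafilters $x_i\in\overline{L_i}$, $1\le i\le n-1$, such that $1\,\tilde{\mid}\,x_1\,\tilde{\mid}\,x_2\cdots\tilde{\mid}\,x_{n-1}\,\tilde{\mid}\,x$. (b) For any ultrafilter $x_m\in\overline{L_m}$ there exists a sequence $\langle x_n: n\ge m\rangle$ with $x_n\in\overline{L_n}$ such that $x_m\,\tilde{\mid}\,x_n$ for all $n\ge m$.
   Context: $\mathbb{N}=\{1,2,3,\dots\}$; $\beta\mathbb{N}$ is the set of ultrafilters on $\mathbb{N}$ (Stone–Čech compactification, naturals identified with principal ultrafilters). For $A\subseteq\mathbb{N}$, $\overline{A}=\{x\in\beta\mathbb{N}:A\in x\}$. $P$ is the set of primes, $L_0=\{1\}$, $L_n=\{a_1\cdots a_n:a_i\in P\}$. For $x,y\in\beta\mathbb{N}$, $x\,\tilde{\mid}\,y$ iff for every $A\in x$ the set $\{k\in\mathbb{N}:\exists a\in A,\ a\mid k\}$ belongs to $y$. *)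

(* Defs.v *)
From mathcomp Require Import all_boot.
Set Implicit Arguments. Unset Strict Implicit. Unset Printing Implicit Defensive.

(* Subsets of N = {1,2,...} are modelled as predicates on nat; an ultrafilter
   on N is a family of such predicates that is an ultrafilter on nat
   containing the set of positive naturals (so it is concentrated on N). *)
Definition natset := nat -> Prop.

Definition is_ultrafilter (x : natset -> Prop) : Prop :=
  [/\ x (fun n => 0 < n),
      ~ x (fun _ => False),
      (forall A B : natset, x A -> (forall n, A n -> B n) -> x B),
      (forall A B : natset, x A -> x B -> x (fun n => A n /\ B n)) &
      (forall A : natset, x A \/ x (fun n => ~ A n))].

Definition principal (a : nat) : natset -> Prop := fun A => A a.

Definition L (n : nat) : natset :=
  fun k => exists s : seq nat, [/\ size s = n, all prime s & k = \prod_(p <- s) p].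

Definition divup (A : natset) : natset :=
  fun k => 0 < k /\ exists a, A a /\ a %| k.

Definition tdiv (x y : natset -> Prop) : Prop :=
  forall A : natset, x A -> y (divup A).

(* Main.v *)
Require Import Defs.
From mathcomp Require Import all_boot.
From mathcomp Require Import zify.

Definition image (f : nat -> nat) (y : natset -> Prop) : natset -> Prop :=
  fun A => y (fun k => A (f k)).

Lemma image_uf f y : is_ultrafilter y -> (forall k, 0 < k -> 0 < f k) ->
  is_ultrafilter (image f y).
Proof.
case=> hp h0 hup hI hC hf; split; rewrite /image.
- by apply: (hup _ _ hp) => k /hf.
- by [].
- by move=> A B hA hAB; apply: (hup _ _ hA) => k /hAB.
- by move=> A B hA hB; apply: hI.
- by move=> A; apply: hC.
Qed.

Lemma tdiv_image f y : is_ultrafilter y -> (forall k, 0 < k -> 0 < f k) ->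
  (forall k, f k %| k) -> tdiv (image f y) y.
Proof.
case=> hp h0 hup hI hC hf hd A hA; rewrite /image in hA.
apply: (hup _ _ (hI _ _ hp hA)) => k [kp Ak]; split => //; exists (f k); split => //.
Qed.

Lemma tdiv_refl y : is_ultrafilter y -> tdiv y y.
Proof.
move=> U; have := @tdiv_image id y U (fun k h => h) (fun k => dvdnn k).
by [].
Qed.

Lemma tdiv_one y : is_ultrafilter y -> tdiv (principal 1) y.
Proof.
case=> hp h0 hup hI hC A hA; rewrite /principal in hA.
apply: (hup _ _ hp) => k kp; split => //; exists 1; split => //; exact: dvd1n.
Qed.

Definition g (k : nat) := k %/ pdiv k.

Lemma g_pos k : 0 < k -> 0 < g k.
Proof.
move=> kp; rewrite /g divn_gt0; last by rewrite pdiv_gt0.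
by apply: dvdn_leq => //; exact: pdiv_dvd.
Qed.

Lemma g_dvd k : g k %| k.
Proof.
rewrite /g; case: (posnP k) => [->|kp]; first by rewrite div0n.
by apply/dvdnP; exists (pdiv k); rewrite mulnC divnK // pdiv_dvd.
Qed.

Lemma prime_in_prod p s : prime p -> all prime s -> p %| \prod_(q <- s) q -> p \in s.
Proof.
move=> pp; elim: s => [|q s IH] /=; first by rewrite big_nil dvdn1 => _ /eqP h; rewrite h in pp.
case/andP=> qp /IH {}IH; rewrite big_cons Euclid_dvdM // => /orP[|/IH].
  by rewrite dvdn_prime2 // inE => ->.
by rewrite inE => ->; rewrite orbT.
Qed.

Lemma g_L i k : L i.+1 k -> L i (g k).
Proof.
case=> s [hs ha ->].
have k1 : 1 < \prod_(q <- s) q.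
  case: s hs ha => [|q s]; first by [].
  move=> _ /= /andP[qp ap]; rewrite big_cons.
  have : 0 < \prod_(r <- s) r.
    elim: s ap {qp} => [|r s IH] /=; first by rewrite big_nil.
    by case/andP=> rp /IH; rewrite big_cons muln_gt0 (prime_gt0 rp).
  move: (prime_gt1 qp); nia.
have pp := pdiv_prime k1.
have pin := @prime_in_prod _ s pp ha (pdiv_dvd _).
exists (rem (pdiv (\prod_(q <- s) q)) s); split.
- by rewrite size_rem // hs.
- by apply/allP => r /mem_rem; move/allP: ha; apply.
- rewrite /g {1}(big_rem _ pin) /= mulKn //; exact: prime_gt0.
Qed.

Lemma iter_props n x : is_ultrafilter x -> x (L n) ->
  forall j, j <= n -> is_ultrafilter (image (iter j g) x) /\ image (iter j g) x (L (n - j)).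
Proof.
move=> U hx; elim=> [|j IH] hj.
  by rewrite subn0; split.
have [U' h'] := IH (ltnW hj).
have -> : image (iter j.+1 g) x = image g (image (iter j g) x) by [].
split; first exact: (@image_uf _ _ U' g_pos).
have e : n - j = (n - j.+1).+1 by lia.
rewrite e in h'; case: U' => _ _ hup _ _.
by apply: (hup _ _ h') => k /g_L.
Qed.

Lemma L_mul2 m d k : L m k -> L (m + d) (k * 2 ^ d).
Proof.
move=> h; elim: d => [|d [s [hs ha hk]]]; first by rewrite addn0 expn0 muln1.
exists (2 :: s); split.
- by rewrite /= hs addnS.
- by rewrite /= ha.
- by rewrite big_cons -hk expnS; lia.
Qed.

Theorem corollary2p15 :
  (* (a) *)
  (forall (n : nat) (x : natset -> Prop),
      1 <= n -> is_ultrafilter x -> x (L n) ->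
      exists xs : nat -> (natset -> Prop),
        (forall i, 0 < i < n -> is_ultrafilter (xs i) /\ xs i (L i)) /\
        (forall i, i < n ->
           tdiv (if i == 0 then principal 1 else xs i)
                (if i.+1 == n then x else xs i.+1)))
  /\
  (* (b) *)
  (forall (m : nat) (x : natset -> Prop),
      is_ultrafilter x -> x (L m) ->
      exists xs : nat -> (natset -> Prop),
        xs m = x /\
        (forall n, m <= n ->
           [/\ is_ultrafilter (xs n), xs n (L n) & tdiv x (xs n)])).
Proof.
split.
- move=> n x n1 U hx.
  have P := @iter_props _ _ U hx.
  exists (fun i => image (iter (n - i) g) x); split.
    move=> i /andP[i0 iu]; have [A B] := P (n - i) (leq_subr _ _).
    by split => //; rewrite subKn // ltnW in B.
  move=> i iu.
  have Ut : is_ultrafilter (if i.+1 == n then x else image (iter (n - i.+1) g) x).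
    by case: ifP => // _; exact: (P _ (leq_subr _ _)).1.
  case: eqP => [_|i0]; first exact: tdiv_one.
  have [U2 _] := P (n - i.+1) (leq_subr _ _).
  have e : n - i = (n - i.+1).+1 by lia.
  rewrite e.
  case: eqP => [en|_].
    have -> : n - i.+1 = 0 by lia.
    exact: (@tdiv_image _ _ U g_pos g_dvd).
  exact: (@tdiv_image _ _ U2 g_pos g_dvd).
- move=> m x U hx.
  exists (fun n => if n == m then x else image (fun k => k * 2 ^ (n - m)) x).
  rewrite eqxx; split => // n mn; case: eqP => [->|_]; first by split => //; exact: tdiv_refl.
  have hp : forall k, 0 < k -> 0 < k * 2 ^ (n - m) by move=> k kp; rewrite muln_gt0 kp expn_gt0.
  case: (U) => hP h0 hup hI hC.
  split.
  + exact: (@image_uf _ _ U hp).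
  + rewrite /image; apply: (hup _ _ hx) => k /(@L_mul2 _ (n - m)); by rewrite subnKC.
  + move=> A hA; rewrite /image /divup; apply: (hup _ _ (hI _ _ hP hA)) => k [kp Ak].
    split; first exact: hp.
    by exists k; split => //; exact: dvdn_mulr.
Qed.
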